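(* Let $q$ be a power of an odd prime, $0<r_1<r_2<n$ integers, $a_1,a_2\in\mathbb{F}_{q^n}^*$ with the multiplicative order of $a_2$ dividing $q^{r_1}-1$, and $S(x)=a_1x^{q^{r_1}}+a_2x^{q^{r_2}}$. Then for each $t\in\{r_1,r_2\}$, $S(x)$ is a scattered polynomial of index $t$ over $\mathbb{F}_{q^n}$ if and only if $\gcd(r_2-r_1,n)=1$.
   Context: An $\mathbb{F}_q$-linearized polynomial $S\in\mathbb{F}_{q^n}[x]$ is a scattered polynomial of index $t$ over $\mathbb{F}_{q^n}$ if for all $y,z\in\mathbb{F}_{q^n}^*$, $\frac{S(y)}{y^{q^t}}=\frac{S(z)}{z^{q^t}}$ implies $y/z\in\mathbb{F}_q$. *)

(* Defs.v *)
From HB Require Import structures.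
From mathcomp Require Import all_boot all_order all_algebra all_field.
Set Implicit Arguments. Unset Strict Implicit. Unset Printing Implicit Defensive.
Import GRing.Theory.
Local Open Scope ring_scope.

(* L is an extension of the finite field F = F_q; F_q inside L is the
   subspace 1%VS = <[1]>%VS (the image of F). *)

Definition linbinomial (L : fieldType) (q r1 r2 : nat) (a1 a2 : L) : {poly L} :=
  a1 *: 'X^(q ^ r1) + a2 *: 'X^(q ^ r2).

Definition scattered (F : fieldType) (L : fieldExtType F) (q t : nat)
  (S : {poly L}) : Prop :=
  forall y z : L, y != 0 -> z != 0 ->
    S.[y] / y ^+ (q ^ t) = S.[z] / z ^+ (q ^ t) -> y / z \in 1%VS.

(* Main.v *)
Require Import Defs.
From HB Require Import structures.
From mathcomp Require Import all_boot all_order all_algebra all_field.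
From mathcomp Require Import cyclic zify ring.
Import GRing.Theory.
Local Open Scope ring_scope.

Lemma fixM (R : ringType) (w : R) q m k : w ^+ (q ^ m) = w -> w ^+ (q ^ (k * m)) = w.
Proof.
move=> h; elim: k => [|k IH]; first by rewrite mul0n expn0 expr1.
by rewrite mulSn expnD exprM h IH.
Qed.

Lemma fixB (R : ringType) (w : R) (q s n : nat) : (0 < n)%N -> gcdn s n = 1%N ->
  w ^+ (q ^ s) = w -> w ^+ (q ^ n) = w -> w ^+ q = w.
Proof.
move=> n0 g hs hn; have [a _ ha] := Bezoutr s n0; rewrite g in ha.
have hq : (w ^+ q) ^+ (q ^ s) = w ^+ q by rewrite -exprM mulnC exprM hs.
have e1 : w ^+ (q ^ (1 + a * s)) = w by rewrite -(divnK ha); apply: fixM.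
by rewrite -{2}e1 expnD expn1 exprM (@fixM _ _ _ _ a hq).
Qed.

Section S.
Variables (F : finFieldType) (L : fieldExtType F).
Lemma inF (x : L) : (x \in 1%VS) = (x ^+ #|F| == x).
Proof. by rewrite -[1%VS]/(1%AS : {vspace L}) Fermat's_little_theorem dimv1 expn1. Qed.
Lemma frobn (x : L) : x ^+ (#|F| ^ \dim {:L}) = x.
Proof. by apply/eqP; rewrite -[{:L}%VS]/({:L}%AS : {vspace L}) -Fermat's_little_theorem memvf. Qed.
Let finL := FinFieldExtType L.
Lemma cardL : #|finL| = (#|F| ^ \dim {:L})%N.
Proof. have := card_vspace (fullv : {vspace finvect_type L}). rewrite card_vspacef. done. Qed.

Lemma primL : exists z : L, (#|F| ^ \dim {:L}).-1.-primitive_root z.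
Proof.
set N := (#|F| ^ \dim {:L})%N.
have N0 : (0 < N)%N by rewrite expn_gt0 (leq_trans _ (finNzRing_gt1 F)).
have N1 : (0 < N.-1)%N.
  rewrite -subn1 subn_gt0 /N -(expn0 #|F|) ltn_exp2l ?finNzRing_gt1 //.
  exact: (adim_gt0 {:L}%AS).
have : has N.-1.-primitive_root (enum (predC1 (0 : finL))).
  apply: has_prim_root => //.
- apply/allP => x; rewrite mem_enum /= => x0; rewrite unity_rootE.
  apply/eqP; apply: (mulIf x0); rewrite mul1r -exprSr prednK //.
  exact: (frobn x).
- exact: enum_uniq.
- by rewrite -cardE cardC1 cardL.
by case/hasP=> z _ hz; exists z.
Qed.

Lemma existsW (d : nat) : (1 < d)%N -> (d %| \dim {:L})%N ->
  exists w : L, [/\ w != 0, w ^+ (#|F| ^ d) = w & w \notin 1%VS].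
Proof.
move=> d1 dn; have [z pz] := primL.
set q := #|F| in pz *; set n := \dim {:L} in pz dn.
have q1 : (1 < q)%N := finNzRing_gt1 F.
set M := (q ^ d).-1.
have qd : (q < q ^ d)%N by rewrite -{1}(expn1 q) ltn_exp2l.
have M0 : (0 < M)%N by rewrite /M -subn1 subn_gt0 (ltn_trans _ qd).
have MN : (M %| (q ^ n).-1)%N by rewrite -(divnK dn) mulnC expnM dvdn_pred_predX.
have pw := dvdn_prim_root pz MN.
set w := z ^+ _ in pw.
have wM : w ^+ M = 1 := prim_expr_order pw.
have w0 : w != 0.
  apply/eqP => w0; move: wM; rewrite w0 expr0n eqn0Ngt M0 /= => /eqP.
  by rewrite eq_sym oner_eq0.
exists w; split => //.
  have -> : (q ^ d = M.+1)%N by rewrite /M prednK // expn_gt0 (ltnW q1).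
  by rewrite exprS wM mulr1.
rewrite inF; apply/negP => /eqP wq.
have : w ^+ q.-1 = 1.
  apply: (mulfI w0); rewrite mulr1 -exprS prednK //; exact: ltnW.
move/eqP; rewrite -(prim_order_dvd pw) => /dvdn_leq.
rewrite -subn1 subn_gt0 => /(_ q1); rewrite /M -!subn1 => h.
move: h qd; set Q := (q ^ d)%N; lia.
Qed.
End S.
Arguments inF {F L}.
Arguments frobn {F L}.
Arguments existsW {F L}.
Arguments primL {F L}.


Ltac fld := field; try (by repeat (apply/andP; split)).


Lemma keyeq (R : fieldType) (a1 a2 y z : R) (A B T : nat) : a1 != 0 -> a2 != 0 ->
  y != 0 -> z != 0 -> (T = A \/ T = B) ->
  (a1 * y ^+ A + a2 * y ^+ B) / y ^+ T = (a1 * z ^+ A + a2 * z ^+ B) / z ^+ T ->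
  (y / z) ^+ A = (y / z) ^+ B.
Proof.
move=> a10 a20 y0 z0 hT h.
have yA : y ^+ A != 0 by rewrite expf_neq0.
have yB : y ^+ B != 0 by rewrite expf_neq0.
have zA : z ^+ A != 0 by rewrite expf_neq0.
have zB : z ^+ B != 0 by rewrite expf_neq0.
rewrite !expr_div_n.
case: hT => ?; subst T.
- have h2 : y ^+ B / y ^+ A = z ^+ B / z ^+ A.
    apply: (mulfI a20); apply: (addrI a1).
    have -> : a1 + a2 * (y ^+ B / y ^+ A) = (a1 * y ^+ A + a2 * y ^+ B) / y ^+ A by fld.
    rewrite h; fld.
  have -> : y ^+ B = (y ^+ B / y ^+ A) * y ^+ A by fld.
  rewrite h2; fld.

- have h2 : y ^+ A / y ^+ B = z ^+ A / z ^+ B.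
  apply: (mulfI a10); apply: (addIr a2).
  have -> : a1 * (y ^+ A / y ^+ B) + a2 = (a1 * y ^+ A + a2 * y ^+ B) / y ^+ B by fld.
  rewrite h; fld.
have -> : y ^+ A = (y ^+ A / y ^+ B) * y ^+ B by fld.
rewrite h2; fld.
Qed.

Lemma keyconv (R : fieldType) (a1 a2 w : R) (A B T : nat) : w != 0 -> (T = A \/ T = B) ->
  w ^+ A = w ^+ B ->
  (a1 * w ^+ A + a2 * w ^+ B) / w ^+ T = (a1 * 1 ^+ A + a2 * 1 ^+ B) / 1 ^+ T.
Proof.
move=> w0 hT h; rewrite !expr1n mulr1 divr1.
have wA : w ^+ A != 0 by rewrite expf_neq0.
have wB : w ^+ B != 0 by rewrite expf_neq0.
case: hT => ->.
- rewrite -h; fld.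
- rewrite h; fld.
Qed.

Lemma equivP {F : finFieldType} {L : fieldExtType F} (r1 r2 : nat) (w : L) :
  (r1 <= r2)%N -> (r1 <= \dim {:L})%N ->
  w ^+ (#|F| ^ r1) = w ^+ (#|F| ^ r2) <-> w ^+ (#|F| ^ (r2 - r1)) = w.
Proof.
move=> r12 r1n; set Q := #|F|; set n := \dim {:L} in r1n *.
have eR : (Q ^ r2 = Q ^ (r2 - r1) * Q ^ r1)%N by rewrite -expnD subnK.
split=> h; last by rewrite eR exprM h.
have e1 : (Q ^ r1 * Q ^ (n - r1) = Q ^ n)%N by rewrite -expnD subnKC.
have e2 : (Q ^ r2 * Q ^ (n - r1) = Q ^ (r2 - r1) * Q ^ n)%N.
  by rewrite -!expnD; congr (_ ^ _)%N; lia.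
have := frobn w; rewrite -e1 exprM h -exprM e2 exprM frobn.
by [].
Qed.

Theorem mainTheorem8 (F : finFieldType) (L : fieldExtType F)
  (p k q n r1 r2 : nat) (a1 a2 : L) :
  prime p -> odd p -> (0 < k)%N -> q = (p ^ k)%N -> #|F| = q ->
  \dim (fullv : {vspace L}) = n ->
  (0 < r1)%N -> (r1 < r2)%N -> (r2 < n)%N ->
  a1 != 0 -> a2 != 0 ->
  a2 ^+ (q ^ r1 - 1) = 1 ->
  forall t : nat, t = r1 \/ t = r2 ->
    (scattered q t (linbinomial q r1 r2 a1 a2) <-> gcdn (r2 - r1) n = 1%N).
Proof.
move=> _ _ _ _ hF hn r10 r12 r2n a10 a20 _ t ht.
subst q n; rewrite /scattered /linbinomial.
have hor y : (a1 *: 'X^(#|F| ^ r1) + a2 *: 'X^(#|F| ^ r2)).[y]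
    = a1 * y ^+ (#|F| ^ r1) + a2 * y ^+ (#|F| ^ r2).
  by rewrite hornerD !hornerZ !hornerXn.
have r1le : (r1 <= r2)%N by exact: ltnW.
have r1n : (r1 <= \dim {:L})%N by apply: ltnW; apply: ltn_trans r2n.
have n0 : (0 < \dim {:L})%N by apply: leq_ltn_trans r2n.
have ht' : (#|F| ^ t = #|F| ^ r1 \/ #|F| ^ t = #|F| ^ r2)%N.
  by case: ht => ->; [left | right].
split.
- move=> sc; set g := gcdn _ _.
  have g0 : (0 < g)%N by rewrite gcdn_gt0 n0 orbT.
  case: (ltngtP g 1) => // [|g1]; first by rewrite ltnS leqn0 => /eqP g00; rewrite g00 in g0.
  have [w [w0 wg wF]] := existsW g g1 (dvdn_gcdr _ _).
  have ws : w ^+ (#|F| ^ (r2 - r1)) = w.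
    by rewrite -(divnK (dvdn_gcdl (r2 - r1) (\dim {:L}))) -/g; apply: fixM.
  have wP := (proj2 (equivP r1 r2 w r1le r1n) ws).
  have := sc w 1 w0 (oner_neq0 _).
  rewrite !hor divr1 => /(_ (@keyconv _ a1 a2 w _ _ _ w0 ht' wP)).
  by rewrite (negbTE wF).
- move=> g y z y0 z0; rewrite !hor => h.
  have hw := @keyeq _ _ _ _ _ _ _ _ a10 a20 y0 z0 ht' h.
  rewrite inF; apply/eqP.
  apply: (@fixB _ _ _ (r2 - r1) _ n0 g _ (frobn _)).
  by apply/(equivP r1 r2 _ r1le r1n).
Qed.
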